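(* Let $(S,\mathfrak{n})$ be a complete Noetherian local ring, $I$ an ideal of $S$, and $x_1,\dots,x_r$ a minimal generating sequence of $I$ which is $\Gamma$-expandable for a standard set $\Gamma$ of monomials in $k[T_1,\dots,T_r]$. Then $T_1,\dots,T_r\in\Gamma$.
   Context: A standard set is a set of monomials closed under taking divisors. For $u=T_1^{a_1}\cdots T_r^{a_r}$, $u(x)=x_1^{a_1}\cdots x_r^{a_r}$. A lifting is a map $\sigma:S/I\to S$ with $\sigma(0)=0$ and $\pi\circ\sigma=\mathrm{id}_{S/I}$. The sequence $x_1,\dots,x_r$ is $\Gamma$-expandable if for every lifting $\sigma$, every $f\in S$ has a unique representation $f=\sum_{u\in\Gamma}f_uu(x)$ (convergent sum) with all $f_u\in\sigma(S/I)$. *)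

(* Defs.v *)
From mathcomp Require Import all_boot all_order all_algebra.
Set Implicit Arguments. Unset Strict Implicit. Unset Printing Implicit Defensive.
Import GRing.Theory.
Local Open Scope ring_scope.

Record is_ideal (S : comUnitRingType) (J : S -> Prop) : Prop := IsIdeal {
  ideal0 : J 0;
  idealD : forall a b, J a -> J b -> J (a + b);
  idealM : forall c a, J a -> J (c * a) }.

Definition generates (S : comUnitRingType) (J : S -> Prop) (n : nat) (g : 'I_n -> S) : Prop :=
  forall a, J a <-> exists c : 'I_n -> S, a = \sum_(i < n) c i * g i.

Definition noetherian (S : comUnitRingType) : Prop :=
  forall J : S -> Prop, is_ideal J -> exists n (g : 'I_n -> S), generates J g.

(* (S, m) is a local ring with maximal ideal m: m is a proper ideal and
   every element outside m is a unit (so m is the unique maximal ideal). *)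
Definition local_ring (S : comUnitRingType) (m : S -> Prop) : Prop :=
  [/\ is_ideal m, ~ m 1 & forall a, ~ m a -> a \is a GRing.unit].

Fixpoint ideal_pow (S : comUnitRingType) (m : S -> Prop) (k : nat) : S -> Prop :=
  match k with
  | 0 => fun _ => True
  | k'.+1 => fun a => exists N (b c : 'I_N -> S),
      [/\ forall i, m (b i), forall i, ideal_pow m k' (c i)
        & a = \sum_(i < N) b i * c i]
  end.

Definition madic_lim (S : comUnitRingType) (m : S -> Prop) (u : nat -> S) (l : S) : Prop :=
  forall k, exists N, forall p, (N <= p)%N -> ideal_pow m k (u p - l).

(* S is complete (and separated) in the m-adic topology *)
Definition complete (S : comUnitRingType) (m : S -> Prop) : Prop :=
  (forall a, (forall k, ideal_pow m k a) -> a = 0) /\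
  (forall u : nat -> S,
     (forall k, exists N, forall p q, (N <= p)%N -> (N <= q)%N ->
        ideal_pow m k (u p - u q)) ->
     exists l, madic_lim m u l).

Definition minimal_generating (S : comUnitRingType) (J : S -> Prop) (r : nat) (x : 'I_r -> S) : Prop :=
  generates J x /\ forall n (y : 'I_n -> S), generates J y -> (r <= n)%N.

(* monomials T_1^{a_1} ... T_r^{a_r} in r variables, as exponent tuples *)
Definition monomial (r : nat) := r.-tuple nat.

Definition mono_eval (S : comUnitRingType) (r : nat) (x : 'I_r -> S) (u : monomial r) : S :=
  \prod_(i < r) x i ^+ tnth u i.

Definition mono_var (r : nat) (i : 'I_r) : monomial r := [tuple (i == j : nat) | j < r].

Definition mono_divides (r : nat) (v u : monomial r) : Prop :=
  forall i, (tnth v i <= tnth u i)%N.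

Definition standard_set (r : nat) (G : monomial r -> Prop) : Prop :=
  forall u v, G u -> mono_divides v u -> G v.

(* unconditional m-adic convergence of sum_{u in G} a u to f *)
Definition has_sum (S : comUnitRingType) (m : S -> Prop) (r : nat)
    (G : monomial r -> Prop) (a : monomial r -> S) (f : S) : Prop :=
  forall k, exists F0 : seq (monomial r),
    (forall u, u \in F0 -> G u) /\
    forall F : seq (monomial r), uniq F -> (forall u, u \in F -> G u) ->
      {subset F0 <= F} -> ideal_pow m k (f - \sum_(u <- F) a u).

(* A lifting sigma : S/I -> S with sigma(0)=0, pi o sigma = id is encoded by
   sig := sigma o pi : S -> S, i.e. a map constant on cosets of I, with
   sig a = a mod I and sig 0 = 0. Its image is sigma(S/I). *)
Definition lifting (S : comUnitRingType) (I : S -> Prop) (sig : S -> S) : Prop :=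
  [/\ forall a b, I (a - b) -> sig a = sig b,
      forall a, I (sig a - a) & sig 0 = 0].

Definition expandable (S : comUnitRingType) (m I : S -> Prop) (r : nat)
    (x : 'I_r -> S) (G : monomial r -> Prop) : Prop :=
  forall sig : S -> S, lifting I sig ->
  forall f : S,
    (exists F : monomial r -> S,
       (forall u, G u -> exists a, F u = sig a) /\
       has_sum m G (fun u => F u * mono_eval x u) f) /\
    (forall F F' : monomial r -> S,
       (forall u, G u -> exists a, F u = sig a) ->
       has_sum m G (fun u => F u * mono_eval x u) f ->
       (forall u, G u -> exists a, F' u = sig a) ->
       has_sum m G (fun u => F' u * mono_eval x u) f ->
       forall u, G u -> F u = F' u).

(* Main.v *)
Require Import Defs.
From mathcomp Require Import all_boot all_order all_algebra ring.
From Stdlib Require Import ClassicalEpsilon FunctionalExtensionality PropExtensionality.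
Set Implicit Arguments. Unset Strict Implicit. Unset Printing Implicit Defensive.
Import GRing.Theory.
Local Open Scope ring_scope.

Lemma ideal_sub (S : comUnitRingType) (J : S -> Prop) a b :
  is_ideal J -> J a -> J b -> J (a - b).
Proof.
move=> [h0 hD hM] ha hb; rewrite -mulN1r; apply: hD => //; exact: hM.
Qed.

Lemma ideal_sum (S : comUnitRingType) (J : S -> Prop) (T : Type) (s : seq T) (P : pred T) (F : T -> S) :
  is_ideal J -> (forall t, P t -> J (F t)) -> J (\sum_(t <- s | P t) F t).
Proof.
move=> [h0 hD hM] hF; apply: (big_ind J) => //; exact: hD.
Qed.

Lemma pow_ideal (S : comUnitRingType) (m : S -> Prop) k :
  is_ideal m -> is_ideal (ideal_pow m k).
Proof.
move=> [m0 mD mM]; case: k => [|k] //.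
split=> //=.
- by exists 0%N, (fun _ => 0), (fun _ => 0); split; [by case | by case | by rewrite big_ord0].
- move=> a b [N1 [b1 [c1 [hb1 hc1 ->]]]] [N2 [b2 [c2 [hb2 hc2 ->]]]].
  exists (N1 + N2)%N.
  exists (fun i => match split i with inl j => b1 j | inr j => b2 j end).
  exists (fun i => match split i with inl j => c1 j | inr j => c2 j end).
  split.
  + by move=> i; case: (split i).
  + by move=> i; case: (split i).
  + rewrite big_split_ord /=; congr (_ + _); apply: eq_bigr => i _.
    * by rewrite (unsplitK (inl _ i)).
    * by rewrite (unsplitK (inr _ i)).
- move=> c a [N [b [c' [hb hc ->]]]].
  exists N, (fun i => c * b i), c'; split => // [i|]; first exact: mM.
  by rewrite mulr_sumr; apply: eq_bigr => i _; rewrite mulrA.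
Qed.

Lemma pow1 (S : comUnitRingType) (m : S -> Prop) a : m a -> ideal_pow m 1 a.
Proof.
move=> ha; exists 1%N, (fun _ => a), (fun _ => 1); split => //.
by rewrite big_ord1 mulr1.
Qed.

Lemma pow1_inv (S : comUnitRingType) (m : S -> Prop) a :
  is_ideal m -> ideal_pow m 1 a -> m a.
Proof.
move=> hm [N [b [c [hb _ ->]]]]; apply: ideal_sum => // i _.
rewrite mulrC; case: hm => _ _ hM; exact: hM.
Qed.

Lemma powS_sub (S : comUnitRingType) (m : S -> Prop) k a :
  is_ideal m -> ideal_pow m k.+1 a -> ideal_pow m k a.
Proof.
move=> hm [N [b [c [hb hc ->]]]]; apply: ideal_sum; first exact: pow_ideal.
move=> i _; case: (pow_ideal k hm) => _ _ hM; apply: hM; exact: hc.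
Qed.

Lemma pow_le (S : comUnitRingType) (m : S -> Prop) k k' a :
  is_ideal m -> (k <= k')%N -> ideal_pow m k' a -> ideal_pow m k a.
Proof.
move=> hm /subnK <-; elim: (k' - k)%N => [|d IH] //= h.
apply: IH; exact: powS_sub.
Qed.

Lemma pow_M (S : comUnitRingType) (m : S -> Prop) k c a :
  is_ideal m -> ideal_pow m k a -> ideal_pow m k (c * a).
Proof. by move=> hm; case: (pow_ideal k hm) => _ _ hM; apply: hM. Qed.

Lemma pow_Ml (S : comUnitRingType) (m : S -> Prop) k c a :
  is_ideal m -> ideal_pow m k a -> ideal_pow m k (a * c).
Proof. by move=> hm h; rewrite mulrC; apply: pow_M. Qed.

Lemma pow_B (S : comUnitRingType) (m : S -> Prop) k a b :
  is_ideal m -> ideal_pow m k a -> ideal_pow m k b -> ideal_pow m k (a - b).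
Proof. move=> hm; apply: ideal_sub; exact: pow_ideal. Qed.

Lemma pow_D (S : comUnitRingType) (m : S -> Prop) k a b :
  is_ideal m -> ideal_pow m k a -> ideal_pow m k b -> ideal_pow m k (a + b).
Proof. by move=> hm; case: (pow_ideal k hm) => _ hD _; apply: hD. Qed.

Lemma pow_0 (S : comUnitRingType) (m : S -> Prop) k :
  is_ideal m -> ideal_pow m k 0.
Proof. by move=> hm; case: (pow_ideal k hm). Qed.

Lemma pow_X (S : comUnitRingType) (m : S -> Prop) (y : S) e :
  m y -> ideal_pow m e (y ^+ e).
Proof.
move=> hy; elim: e => [|e IH] //=.
exists 1%N, (fun _ => y), (fun _ => y ^+ e); split => //.
by rewrite big_ord1 exprS.
Qed.

Lemma lim_unique (S : comUnitRingType) (m : S -> Prop) (u : nat -> S) l1 l2 :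
  is_ideal m -> complete m -> madic_lim m u l1 -> madic_lim m u l2 -> l1 = l2.
Proof.
move=> hm [sep _] h1 h2; apply/eqP; rewrite -subr_eq0; apply/eqP/sep => k.
have [N1 H1] := h1 k; have [N2 H2] := h2 k.
have -> : l1 - l2 = (u (maxn N1 N2) - l2) - (u (maxn N1 N2) - l1).
  by ring.
by apply: pow_B => //; [apply: H2 | apply: H1]; rewrite ?leq_maxr ?leq_maxl.
Qed.

Lemma lim_D (S : comUnitRingType) (m : S -> Prop) (u v : nat -> S) l1 l2 :
  is_ideal m -> madic_lim m u l1 -> madic_lim m v l2 ->
  madic_lim m (fun p => u p + v p) (l1 + l2).
Proof.
move=> hm h1 h2 k; have [N1 H1] := h1 k; have [N2 H2] := h2 k.
exists (maxn N1 N2) => p hp.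
have -> : u p + v p - (l1 + l2) = (u p - l1) + (v p - l2).
  by ring.
apply: pow_D => //; [apply: H1 | apply: H2]; apply: leq_trans hp;
  by rewrite ?leq_maxl ?leq_maxr.
Qed.

Lemma lim_M (S : comUnitRingType) (m : S -> Prop) (u : nat -> S) l c :
  is_ideal m -> madic_lim m u l -> madic_lim m (fun p => c * u p) (c * l).
Proof.
move=> hm h k; have [N H] := h k; exists N => p hp.
by rewrite -mulrBr; apply: pow_M => //; apply: H.
Qed.

Lemma lim_sum (S : comUnitRingType) (m : S -> Prop) (I : Type) (s : seq I)
   (u : I -> nat -> S) (l : I -> S) :
  is_ideal m -> (forall j, madic_lim m (u j) (l j)) ->
  madic_lim m (fun p => \sum_(j <- s) u j p) (\sum_(j <- s) l j).
Proof.
move=> hm h; elim: s => [|j s IH].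
  by move=> k; exists 0%N => p _; rewrite !big_nil subr0; apply: pow_0.
have := lim_D hm (h j) IH; move=> H k; have [N HN] := H k; exists N => p hp.
by rewrite !big_cons; apply: HN.
Qed.
Definition inbox r (d : nat) (u : monomial r) : bool := [forall j, tnth u j <= d]%N.
Definition box r d : seq (monomial r) :=
  map (fun t : r.-tuple 'I_d.+1 => map_tuple (@nat_of_ord d.+1) t)
      (enum {: r.-tuple 'I_d.+1}).

Lemma box_uniq r d : uniq (box r d).
Proof.
rewrite map_inj_uniq ?enum_uniq // => t t' e.
apply: eq_from_tnth => j; apply: val_inj.
by have := congr1 (fun u => tnth u j) e; rewrite /= !tnth_map.
Qed.

Lemma mem_box r d u : (u \in box r d) = inbox d u.
Proof.
apply/idP/idP.
  case/mapP => t _ ->; apply/forallP => j; rewrite tnth_map.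
  by rewrite -ltnS ltn_ord.
move/forallP => h; apply/mapP.
exists [tuple inord (tnth u j) | j < r]; first by rewrite mem_enum.
apply: eq_from_tnth => j; rewrite tnth_map tnth_mktuple inordK //.
by rewrite ltnS h.
Qed.

Definition Gb r (G : monomial r -> Prop) (u : monomial r) : bool :=
  if excluded_middle_informative (G u) then true else false.

Lemma GbP r (G : monomial r -> Prop) u : Gb G u <-> G u.
Proof. by rewrite /Gb; case: excluded_middle_informative. Qed.

Definition Pl r (G : monomial r -> Prop) d := [seq u <- box r d | Gb G u].

Lemma Pl_uniq r G d : uniq (@Pl r G d).
Proof. by rewrite filter_uniq ?box_uniq. Qed.

Lemma mem_Pl r G d u : (u \in @Pl r G d) = Gb G u && inbox d u.
Proof. by rewrite mem_filter mem_box. Qed.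

Lemma inbox_le r q p (u : monomial r) : (q <= p)%N -> inbox q u -> inbox p u.
Proof.
move=> hqp /forallP h; apply/forallP => j; exact: leq_trans (h j) hqp.
Qed.

Lemma Pl_split (S : comUnitRingType) r G q p (f : monomial r -> S) : (q <= p)%N ->
  \sum_(u <- Pl G p) f u = \sum_(u <- Pl G q) f u + \sum_(u <- Pl G p | ~~ inbox q u) f u.
Proof.
move=> hqp; rewrite (bigID (inbox q)) /=; congr (_ + _).
rewrite -big_filter; apply: perm_big; apply: uniq_perm.
- by rewrite filter_uniq ?Pl_uniq.
- exact: Pl_uniq.
move=> u; rewrite mem_filter !mem_Pl.
case h: (inbox q u); rewrite ?andbF //= (inbox_le hqp h).
by rewrite andbT.
Qed.

Lemma Pl_cauchy (S : comUnitRingType) (m : S -> Prop) r G (f : monomial r -> S) :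
  is_ideal m -> (forall q u, G u -> ~~ inbox q u -> ideal_pow m q (f u)) ->
  forall k, exists N, forall p q, (N <= p)%N -> (N <= q)%N ->
    ideal_pow m k (\sum_(u <- Pl G p) f u - \sum_(u <- Pl G q) f u).
Proof.
move=> hm hf k; exists k.
have key : forall p q, (k <= q)%N -> (q <= p)%N ->
    ideal_pow m k (\sum_(u <- Pl G p) f u - \sum_(u <- Pl G q) f u).
  move=> p q hkq hqp; rewrite (Pl_split _ _ hqp) addrC addKr.
  apply: (pow_le hm hkq); rewrite big_seq_cond; apply: ideal_sum; first exact: pow_ideal.
  move=> u /andP[]; rewrite mem_Pl => /andP[/GbP hG _] hn; exact: hf.
move=> p q hp hq; case: (leqP q p) => h; first exact: key.
rewrite -opprB -mulN1r; apply: pow_M => //; apply: key => //; exact: ltnW.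
Qed.

Definition mono0 r : monomial r := [tuple 0%N | _ < r].
Definition dec r (u : monomial r) (k : 'I_r) : monomial r :=
  [tuple (tnth u j - (j == k))%N | j < r].

Lemma eval_dec (S : comUnitRingType) r (x : 'I_r -> S) u k :
  (0 < tnth u k)%N -> mono_eval x u = x k * mono_eval x (dec u k).
Proof.
move=> hk; rewrite /mono_eval (bigD1 k) //= (bigD1 k (P := predT)) //=.
rewrite tnth_mktuple eqxx mulrA -exprS subn1 prednK //; congr (_ * _).
by apply: eq_bigr => j hj; rewrite tnth_mktuple (negbTE hj) subn0.
Qed.

Lemma eval0 (S : comUnitRingType) r (x : 'I_r -> S) :
  mono_eval x (mono0 r) = 1.
Proof. by rewrite /mono_eval big1 // => j _; rewrite tnth_mktuple expr0. Qed.

Lemma eval_deg (S : comUnitRingType) (m : S -> Prop) r (x : 'I_r -> S) u k D :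
  is_ideal m -> (forall j, m (x j)) -> (D <= tnth u k)%N ->
  ideal_pow m D (mono_eval x u).
Proof.
move=> hm hx hD; rewrite /mono_eval (bigD1 k) //=.
apply: pow_Ml => //; apply: (pow_le hm hD); exact: pow_X.
Qed.

Definition wj (S : comUnitRingType) r (F : monomial r -> S) (x : 'I_r -> S) (j : 'I_r)
  (u : monomial r) : S :=
  if [pick k | 0 < tnth u k]%N is Some k then
    (if k == j then F u * mono_eval x (dec u k) else 0) else 0.

Definition c0 (S : comUnitRingType) r (F : monomial r -> S) (u : monomial r) : S :=
  if u == mono0 r then F u else 0.

Lemma decomp (S : comUnitRingType) r (F : monomial r -> S) x u :
  F u * mono_eval x u = c0 F u + \sum_j x j * wj F x j u.
Proof.
rewrite /wj /c0; case: pickP => [k hk|h].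
  have -> : (u == mono0 r) = false.
    apply/negbTE; apply/eqP => e; move: hk; rewrite e tnth_mktuple.
    by [].
  rewrite add0r (bigD1 k) //= eqxx big1 ?addr0.
    by rewrite (eval_dec _ hk) mulrCA.
  by move=> j /negbTE; rewrite eq_sym => ->; rewrite mulr0.
have e : u = mono0 r.
  apply: eq_from_tnth => j; rewrite tnth_mktuple.
  by move: (h j) => /= /negbT; rewrite lt0n negbK => /eqP.
rewrite e eqxx eval0 mulr1 big1 ?addr0 // => j _; exact: mulr0.
Qed.

Lemma wj_deg (S : comUnitRingType) (m : S -> Prop) r (F : monomial r -> S) x j q u :
  is_ideal m -> (forall j, m (x j)) -> ~~ inbox q u -> ideal_pow m q (wj F x j u).
Proof.
move=> hm hx /forallPn [k0]; rewrite -ltnNge => hk0.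
rewrite /wj; case: pickP => [k hk|_]; last exact: pow_0.
case: eqP => _; last exact: pow_0.
apply: pow_M => //; apply: (eval_deg (k := k0)) => //.
rewrite tnth_mktuple; case: (k0 == k) => /=; last by rewrite subn0 ltnW.
by rewrite subn1 -ltnS (ltn_predK hk0).
Qed.

Lemma c0_sum (S : comUnitRingType) r G (F : monomial r -> S) d :
  \sum_(u <- Pl G d) c0 F u = if Gb G (mono0 r) then F (mono0 r) else 0.
Proof.
case hG: (Gb G (mono0 r)).
  have hin : mono0 r \in Pl G d.
    rewrite mem_Pl hG /=; apply/forallP => j; by rewrite tnth_mktuple.
  rewrite (big_rem _ hin) /c0 eqxx big1_seq; first exact: addr0.
  move=> u /andP[_]; rewrite (mem_rem_uniq _ (Pl_uniq G d)) => /andP[hu _].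
  by rewrite (negbTE hu).
rewrite big1_seq // => u /andP[_]; rewrite mem_Pl /c0 => /andP[hu _].
by case: eqP => // e; move: hu; rewrite e hG.
Qed.

Lemma exists_lifting (S : comUnitRingType) (I : S -> Prop) :
  is_ideal I -> exists sig, lifting I sig.
Proof.
move=> hI.
pose sig0 a := epsilon (inhabits (0 : S)) (fun b => I (b - a)).
have h0 : forall a, I (sig0 a - a).
  move=> a; apply: (epsilon_spec (inhabits (0:S)) (fun b => I (b - a))).
  by exists a; rewrite subrr; case: hI.
pose sig a := if excluded_middle_informative (I a) then 0 else sig0 a.
exists sig; split.
- move=> a b hab; rewrite /sig.
  case: excluded_middle_informative => ha; case: excluded_middle_informative => hb //.
  + case: hb; have -> : b = a - (a - b) by ring.
    exact: ideal_sub.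
  + case: ha; have -> : a = (a - b) + b by ring.
    by case: hI => _ hD _; apply: hD.
  + rewrite /sig0; congr epsilon; apply: functional_extensionality => c.
    apply: propositional_extensionality; split => h.
    * have -> : c - b = (c - a) + (a - b) by ring.
      by case: hI => _ hD _; apply: hD.
    * have -> : c - a = (c - b) - (a - b) by ring.
      exact: ideal_sub.
- move=> a; rewrite /sig; case: excluded_middle_informative => ha; last exact: h0.
  rewrite sub0r -mulN1r; by case: hI => _ _ hM; apply: hM.
- rewrite /sig; case: excluded_middle_informative => // h.
  by case: h; case: hI.
Qed.

Lemma gen_mem (S : comUnitRingType) (I : S -> Prop) r (x : 'I_r -> S) j :
  generates I x -> I (x j).
Proof.
move=> hg; apply/(hg (x j)); exists (fun k => (k == j)%:R).
rewrite (bigD1 j) //= eqxx mul1r big1 ?addr0 // => k /negbTE ->; exact: mul0r.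
Qed.

Lemma drop_gen (S : comUnitRingType) (I : S -> Prop) r (x : 'I_r -> S) i g :
  is_ideal I -> generates I x -> x i = \sum_j x j * g j -> g i = 0 ->
  generates I (fun k : 'I_r.-1 => x (lift i k)).
Proof.
move=> hI hg exi gi a; split.
  move=> /(hg a) [c ha].
  pose c' j := c j + c i * g j.
  exists (fun k => c' (lift i k)).
  have e1 : \sum_j c' j * x j = a + c i * x i.
    rewrite /c' ha exi mulr_sumr -big_split /=; apply: eq_bigr => j _; ring.
  move: e1; rewrite (bigD1_ord i) //= /c' gi mulr0 addr0 => e1.
  have -> : a = (c i * x i + \sum_(k < r.-1) (c (lift i k) + c i * g (lift i k)) * x (lift i k)) - c i * x i.
    by rewrite e1; ring.
  ring.
move=> [c ->]; apply: ideal_sum => // k _.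
by case: hI => _ _ hM; apply: hM; exact: gen_mem hg.
Qed.

Theorem proposition3p12 (S : comUnitRingType) (n I : S -> Prop) (r : nat)
    (x : 'I_r -> S) (Gamma : monomial r -> Prop) :
  noetherian S -> local_ring n -> complete n ->
  is_ideal I -> minimal_generating I x ->
  standard_set Gamma -> expandable n I x Gamma ->
  forall i : 'I_r, Gamma (mono_var i).
Proof.
move=> _ [hn n1 nunit] hc hI [hgen hmin] hstd hexp i.
apply: Classical_Prop.NNPP => hGi.
have [sig [sigE sigI sig0]] := exists_lifting hI.
have hsig : lifting I sig by [].
have xI : forall j, I (x j) by move=> j; exact: gen_mem hgen.
have notI1 : ~ I 1.
  move=> h1.
  have sigz : forall a, sig a = 0.
    move=> a; rewrite -sig0; apply: sigE; rewrite subr0 -[a]mulr1.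
    by case: hI => _ _ hM; apply: hM.
  have [[F1 [hF1 hs1]] _] := hexp sig hsig 1.
  have [F0 [hF0 hall]] := hs1 1%N.
  have hA : forall u, u \in undup F0 -> Gamma u by move=> u; rewrite mem_undup; apply: hF0.
  have hB : {subset F0 <= undup F0} by move=> u; rewrite mem_undup.
  have := hall (undup F0) (undup_uniq _) hA hB.
  rewrite big1_seq ?subr0.
    by move/(pow1_inv hn).
  move=> u /andP[_]; rewrite mem_undup => /hF0 /hF1 [a ->].
  by rewrite sigz mul0r.
have xn : forall j, n (x j).
  move=> j; apply: Classical_Prop.NNPP => h; have hu := nunit _ h.
  apply: notI1; rewrite -(mulVr hu); by case: hI => _ _ hM; apply: hM.
have [[F [hF hsum]] _] := hexp sig hsig (x i).
pose s p := \sum_(u <- Pl Gamma p) F u * mono_eval x u.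
have lim_s : madic_lim n s (x i).
  move=> k; have [F0 [hF0 hall]] := hsum k.
  exists (\max_(u <- F0) \max_(j < r) tnth u j) => p hp.
  rewrite -opprB -mulN1r; apply: pow_M => //; apply: hall.
  - exact: Pl_uniq.
  - by move=> u; rewrite mem_Pl => /andP[/GbP].
  - move=> u hu; rewrite mem_Pl; apply/andP; split; first by apply/GbP; apply: hF0.
    apply/forallP => j; apply: leq_trans hp; apply: leq_trans (leq_bigmax j) _.
    by apply: leq_bigmax_seq.
pose t j p := \sum_(u <- Pl Gamma p) wj F x j u.
have [g hg] : exists g : 'I_r -> S, forall j, madic_lim n (t j) (g j).
  apply: (@fin_all_exists _ (fun _ => S) (fun j y => madic_lim n (t j) y)) => j; apply: hc.2; apply: Pl_cauchy => // q u _.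
  exact: wj_deg.
pose Cst := if Gb Gamma (mono0 r) then F (mono0 r) else 0.
have s_eq : forall p, s p = Cst + \sum_j x j * t j p.
  move=> p; rewrite /s (eq_bigr _ (fun u _ => decomp F x u)) big_split /= c0_sum.
  congr (_ + _); rewrite exchange_big /=; apply: eq_bigr => j _.
  by rewrite mulr_sumr.
have lim2 : madic_lim n s (Cst + \sum_j x j * g j).
  have -> : s = fun p => Cst + \sum_j x j * t j p.
    exact: functional_extensionality.
  apply: (lim_D (u := fun _ => Cst)) => //.
    by move=> k; exists 0%N => p _; rewrite subrr; apply: pow_0.
  apply: lim_sum => // j; exact: lim_M.
have exi := lim_unique hn hc lim_s lim2.
have ti0 : forall p, t i p = 0.
  move=> p; apply: big1_seq => u /andP[_]; rewrite mem_Pl => /andP[/GbP hu _].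
  rewrite /wj; case: pickP => // k hk; case: eqP => // eki.
  case: hGi; apply: (hstd u (mono_var i) hu) => j; rewrite tnth_mktuple.
  by case: eqP => [<-|] //; rewrite -eki.
have gi0 : g i = 0.
  apply: (lim_unique hn hc (hg i)) => k; exists 0%N => p _.
  by rewrite ti0 subrr; apply: pow_0.
have CstI : I Cst.
  have -> : Cst = x i - \sum_j x j * g j by rewrite exi; ring.
  apply: ideal_sub => //; apply: ideal_sum => // j _.
  by rewrite mulrC; case: hI => _ _ hM; apply: hM.
have Cst0 : Cst = 0.
  have [a ha] : exists a, Cst = sig a.
    rewrite /Cst; case: ifP => h; last by exists 0.
    by apply: hF; apply/GbP.
  have aI : I a.
    have -> : a = sig a - (sig a - a) by ring.
    by apply: ideal_sub => //; rewrite -ha.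
  by rewrite ha -sig0; apply: sigE; rewrite subr0.
move: exi; rewrite Cst0 add0r => exi.
have hr : (0 < r)%N := leq_ltn_trans (leq0n i) (ltn_ord i).
have := hmin _ _ (drop_gen hI hgen exi gi0).
by rewrite -{1}(prednK hr) ltnn.
Qed.
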